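(* Let $X=(X_1,X_2)$ and $Y$ where $X_1,Y$ are uniform on $\{1,2,3\}$, $X_2\sim\mathrm{Bern}(p)$ with $0<p\le\frac12$, and $X_1,X_2,Y$ are mutually independent. Let $f_1(X,Y)=\mathbf 1\{X_1=Y\}$ and $f_2(X,Y)=X_2$, with Hamming distortion $d_i(a,b)=\mathbf 1\{a\ne b\}$, and let $D_1=0$ and $0\le D_2\le p$ with $D_2<\frac12$. Then every triple $(R_0,R_X,R_Y)$ with $R_0>\log_2 3$, $R_X>H_b(p)-H_b(D_2)$, and $R_Y>H_b(1/3)$ is achievable with distortions $(D_1,D_2)$; in particular, for $R_0>H(X_1|Y)$ the sum rate $R_X+R_Y$ can be made arbitrarily close to $H(f_1(X,Y))+H_b(p)-H_b(D_2)$.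
   Context: $H_b(q)=-q\log_2q-(1-q)\log_2(1-q)$ is the binary entropy function. Setup: finite alphabets, $(X_i,Y_i)_{i\ge1}$ i.i.d. copies of $(X,Y)$, functions $f_i:\mathcal X\times\mathcal Y\to\mathcal F_i$, distortions $d_i:\mathcal F_i\times\mathcal F_i\to\mathbb R_{\ge0}$. An $(n,R_0,R_X,R_Y)$ code consists of encoders $\varphi_0:\mathcal X^n\to\{1,\dots,2^{nR_0}\}$, $\varphi_X:\mathcal X^n\to\{1,\dots,2^{nR_X}\}$, $\varphi_Y:\mathcal Y^n\times\{1,\dots,2^{nR_0}\}\to\{1,\dots,2^{nR_Y}\}$ and decoders $\psi_i:\{1,\dots,2^{nR_X}\}\times\{1,\dots,2^{nR_Y}\}\to\mathcal F_i^n$; with $\hat F_i=\psi_i(\varphi_X(\mathbf X),\varphi_Y(\varphi_0(\mathbf X),\mathbf Y))$ its average distortions are $\frac1n\sum_{j=1}^n\mathbb E\,d_i(f_i(X_j,Y_j),(\hat F_i)_j)$. A triple is achievable with distortions $D_1,D_2$ if for every $\varepsilon>0$ and all large $n$ there is a code with average distortions at most $D_1$, $D_2$. *)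

(* Defs.v *)
From Stdlib Require Import Reals Lra List Arith.
Import ListNotations.
Open Scope R_scope.

Definition log2 (x : R) : R := ln x / ln 2.
Definition Hb (q : R) : R := - (q * log2 q) - (1 - q) * log2 (1 - q).

(* all sequences of length n over the (duplicate-free) alphabet list A *)
Fixpoint all_seqs {T : Type} (A : list T) (n : nat) : list (list T) :=
  match n with
  | O => [[]]
  | S n' => flat_map (fun a => map (cons a) (all_seqs A n')) A
  end.

Definition sumR {T : Type} (g : T -> R) (l : list T) : R :=
  fold_right (fun a acc => g a + acc) 0 l.

Fixpoint sum_idx {A : Type} (g : nat -> A -> R) (k : nat) (l : list A) : R :=
  match l with
  | [] => 0
  | a :: l' => g k a + sum_idx g (S k) l'
  end.

Definition seq_prob {X Y : Type} (pmf : X -> Y -> R) (xs : list X) (ys : list Y) : R :=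
  fold_right (fun xy acc => pmf (fst xy) (snd xy) * acc) 1 (combine xs ys).

(* number of messages {1,...,2^{nR}} (floor of 2^{nR}); messages are coded as 0..M-1 *)
Definition nmsg (n : nat) (Rt : R) : nat := Z.to_nat (Int_part (Rpower 2 (INR n * Rt))).

(* average distortion (1/n) sum_j E d(f(X_j,Y_j), (hatF)_j) of the reconstruction
   hatF = psi(phiX(X^n), phiY(phi0(X^n), Y^n)), where psi m m' j is the j-th component *)
Definition avg_dist {X Y F : Type} (XA : list X) (YA : list Y) (pmf : X -> Y -> R)
  (f : X -> Y -> F) (d : F -> F -> R) (n : nat)
  (phi0 : list X -> nat) (phiX : list X -> nat) (phiY : list Y -> nat -> nat)
  (psi : nat -> nat -> nat -> F) : R :=
  sumR (fun xs => sumR (fun ys =>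
      seq_prob pmf xs ys *
      (/ INR n * sum_idx (fun j xy =>
                   d (f (fst xy) (snd xy)) (psi (phiX xs) (phiY ys (phi0 xs)) j))
                 0 (combine xs ys)))
    (all_seqs YA n)) (all_seqs XA n).

Definition achievable {X Y F1 F2 : Type} (XA : list X) (YA : list Y)
  (pmf : X -> Y -> R) (f1 : X -> Y -> F1) (f2 : X -> Y -> F2)
  (d1 : F1 -> F1 -> R) (d2 : F2 -> F2 -> R) (R0 RX RY D1 D2 : R) : Prop :=
  forall eps : R, eps > 0 ->
  exists N : nat, forall n : nat, (N <= n)%nat ->
  exists (phi0 : list X -> nat) (phiX : list X -> nat)
         (phiY : list Y -> nat -> nat)
         (psi1 : nat -> nat -> nat -> F1) (psi2 : nat -> nat -> nat -> F2),
    (forall xs, (phi0 xs < nmsg n R0)%nat) /\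
    (forall xs, (phiX xs < nmsg n RX)%nat) /\
    (forall ys m, (phiY ys m < nmsg n RY)%nat) /\
    avg_dist XA YA pmf f1 d1 n phi0 phiX phiY psi1 <= D1 + eps /\
    avg_dist XA YA pmf f2 d2 n phi0 phiX phiY psi2 <= D2 + eps.

Definition XA_ex : list (nat * bool) :=
  [(1%nat, false); (1%nat, true); (2%nat, false); (2%nat, true); (3%nat, false); (3%nat, true)].
Definition YA_ex : list nat := [1%nat; 2%nat; 3%nat].
Definition pmf_ex (p : R) (x : nat * bool) (y : nat) : R :=
  / 3 * (if snd x then p else 1 - p) * / 3.
Definition f1_ex (x : nat * bool) (y : nat) : bool := Nat.eqb (fst x) y.
Definition f2_ex (x : nat * bool) (y : nat) : bool := snd x.
Definition hamming (a b : bool) : R := if Bool.eqb a b then 0 else 1.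

(* Main.v *)
Require Import Defs.
From Stdlib Require Import Reals Lra Lia List Arith Psatz Bool ZArith.
Import ListNotations.
Open Scope R_scope.

Lemma sumR_nil {T} (g : T -> R) : sumR g [] = 0.
Proof. reflexivity. Qed.
Lemma sumR_cons {T} (g : T -> R) a l : sumR g (a :: l) = g a + sumR g l.
Proof. reflexivity. Qed.
Lemma sumR_app {T} (g : T -> R) l1 l2 : sumR g (l1 ++ l2) = sumR g l1 + sumR g l2.
Proof. induction l1; simpl; [ring| rewrite IHl1; ring]. Qed.
Lemma sumR_map {T U} (g : U -> R) (h : T -> U) l : sumR g (map h l) = sumR (fun a => g (h a)) l.
Proof. induction l; simpl; [ring| rewrite IHl; ring]. Qed.
Lemma sumR_flat_map {T U} (g : U -> R) (h : T -> list U) l :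
  sumR g (flat_map h l) = sumR (fun a => sumR g (h a)) l.
Proof. induction l; simpl; [ring| rewrite sumR_app, IHl; ring]. Qed.
Lemma sumR_ext_in {T} (g h : T -> R) l : (forall a, In a l -> g a = h a) -> sumR g l = sumR h l.
Proof. induction l; simpl; intros H; [ring|]. rewrite H, IHl; auto. Qed.
Lemma sumR_ext {T} (g h : T -> R) l : (forall a, g a = h a) -> sumR g l = sumR h l.
Proof. intros; apply sumR_ext_in; auto. Qed.
Lemma sumR_le_in {T} (g h : T -> R) l : (forall a, In a l -> g a <= h a) -> sumR g l <= sumR h l.
Proof. induction l; simpl; intros H; [lra|]. specialize (IHl (fun a H' => H a (or_intror H'))). specialize (H a (or_introl eq_refl)). lra. Qed.
Lemma sumR_plus {T} (g h : T -> R) l : sumR (fun a => g a + h a) l = sumR g l + sumR h l.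
Proof. induction l; simpl; [ring| rewrite IHl; ring]. Qed.
Lemma sumR_scal {T} (c : R) (g : T -> R) l : sumR (fun a => c * g a) l = c * sumR g l.
Proof. induction l; simpl; [ring| rewrite IHl; ring]. Qed.
Lemma sumR_const {T} (c : R) (l : list T) : sumR (fun _ => c) l = INR (length l) * c.
Proof. induction l; simpl sumR; [simpl; ring|]. rewrite IHl. simpl length. rewrite S_INR. ring. Qed.
Lemma sumR_swap {T U} (h : T -> U -> R) l1 l2 :
  sumR (fun a => sumR (fun b => h a b) l2) l1 = sumR (fun b => sumR (fun a => h a b) l1) l2.
Proof.
  induction l1; simpl.
  - induction l2; simpl; [ring| rewrite <- IHl2; ring].
  - rewrite IHl1, <- sumR_plus. reflexivity.
Qed.
Lemma sumR_nonneg {T} (g : T -> R) l : (forall a, In a l -> 0 <= g a) -> 0 <= sumR g l.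
Proof. intros H. replace 0 with (sumR (fun _ : T => 0) l). apply sumR_le_in; auto.
  rewrite sumR_const; ring. Qed.
Lemma sumR_filter {T} (g : T -> R) (P : T -> bool) l :
  sumR g (filter P l) = sumR (fun a => if P a then g a else 0) l.
Proof. induction l; simpl; [ring|]. destruct (P a); simpl; rewrite IHl; ring. Qed.
Lemma sumR_le_single {T} (g : T -> R) l a : (forall b, In b l -> 0 <= g b) -> In a l -> g a <= sumR g l.
Proof. induction l; simpl; intros H Ha; [contradiction|]. destruct Ha as [->|Ha].
  - assert (0 <= sumR g l) by (apply sumR_nonneg; auto). lra.
  - assert (g a <= sumR g l) by (apply IHl; auto). specialize (H a0 (or_introl eq_refl)). lra. Qed.

Lemma all_seqs_S {T} (A : list T) n : all_seqs A (S n) = flat_map (fun a => map (cons a) (all_seqs A n)) A.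
Proof. reflexivity. Qed.
Lemma sumR_all_seqs_S {T} (A : list T) n g :
  sumR g (all_seqs A (S n)) = sumR (fun a => sumR (fun l => g (a :: l)) (all_seqs A n)) A.
Proof. rewrite all_seqs_S, sumR_flat_map. apply sumR_ext; intros; apply sumR_map. Qed.
Lemma in_all_seqs {T} (A : list T) n l : In l (all_seqs A n) -> length l = n /\ forall a, In a l -> In a A.
Proof.
  revert l; induction n; simpl; intros l H.
  - destruct H as [<-|[]]. simpl; split; auto; intros _ [].
  - apply in_flat_map in H. destruct H as [a [Ha H]]. apply in_map_iff in H.
    destruct H as [l' [<- H]]. apply IHn in H. destruct H as [H1 H2]. simpl; split; [lia|].
    intros b [<-|Hb]; auto.
Qed.
Lemma all_seqs_in {T} (A : list T) l : (forall a, In a l -> In a A) -> In l (all_seqs A (length l)).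
Proof.
  induction l; simpl; intros H; [auto|]. apply in_flat_map. exists a. split; auto.
  apply in_map. apply IHl; auto.
Qed.
Lemma length_all_seqs {T} (A : list T) n : length (all_seqs A n) = (length A ^ n)%nat.
Proof.
  induction n; simpl; auto. rewrite flat_map_concat_map.
  assert (forall L : list T, length (concat (map (fun a => map (cons a) (all_seqs A n)) L)) = (length L * length A ^ n)%nat).
  { induction L; simpl; auto. rewrite length_app, length_map, IHL, IHn. lia. }
  rewrite H. reflexivity.
Qed.

Definition BA : list bool := [false; true].
Definition bprob (q : R) (bs : list bool) : R :=
  @fold_right R bool
  (fun b acc => (if b then q else 1 - q) * acc) 1 bs.
Fixpoint wt (l : list bool) : nat := match l with [] => 0%nat | b :: l' => ((if b then 1 else 0) + wt l')%nat end.

Lemma sumB_S n (g : list bool -> R) :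
  sumR g (all_seqs BA (S n)) = sumR (fun l => g (false :: l)) (all_seqs BA n) + sumR (fun l => g (true :: l)) (all_seqs BA n).
Proof. rewrite sumR_all_seqs_S. simpl. ring. Qed.

Lemma bprob_nonneg q bs : 0 <= q <= 1 -> 0 <= bprob q bs.
Proof. intros Hq; induction bs; simpl; [lra|]. destruct a; apply Rmult_le_pos; lra. Qed.

Lemma bprob_sum q n : sumR (bprob q) (all_seqs BA n) = 1.
Proof. induction n; [simpl; ring|]. rewrite sumB_S. simpl bprob.
  rewrite !sumR_scal. change (fun l => bprob q l) with (bprob q). rewrite IHn. ring. Qed.

Lemma moment1 q n : sumR (fun bs => bprob q bs * INR (wt bs)) (all_seqs BA n) = INR n * q.
Proof. induction n; [simpl; ring|]. rewrite sumB_S. simpl bprob; simpl wt.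
  rewrite (sumR_ext _ (fun l => (1-q) * (bprob q l * INR (wt l)))) by (intros; simpl; ring).
  rewrite (sumR_ext (fun l => _ * _ * INR (1 + wt l)) (fun l => q * (bprob q l * INR (wt l)) + q * bprob q l)).
  2:{ intros; rewrite plus_INR; simpl INR; ring. }
  rewrite sumR_plus, !sumR_scal, IHn, bprob_sum. rewrite S_INR. ring. Qed.

Lemma moment2 q n : sumR (fun bs => bprob q bs * INR (wt bs) ^ 2) (all_seqs BA n) = INR n * q * (1 - q) + (INR n * q) ^ 2.
Proof. induction n; [simpl; ring|]. rewrite sumB_S. simpl bprob; simpl wt.
  rewrite (sumR_ext _ (fun l => (1-q) * (bprob q l * INR (wt l) ^ 2))) by (intros; simpl; ring).
  rewrite (sumR_ext (fun l => _ * _ * INR (1 + wt l) ^ 2) (fun l => q * (bprob q l * INR (wt l) ^ 2) + (2 * q * (bprob q l * INR (wt l)) + q * bprob q l))).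
  2:{ intros; rewrite plus_INR; simpl INR; ring. }
  rewrite !sumR_plus, !sumR_scal, IHn, moment1, bprob_sum. rewrite S_INR. ring. Qed.

Lemma variance q n : sumR (fun bs => bprob q bs * (INR (wt bs) - INR n * q) ^ 2) (all_seqs BA n) = INR n * q * (1 - q).
Proof.
  rewrite (sumR_ext _ (fun bs => bprob q bs * INR (wt bs) ^ 2 + ((-2 * INR n * q) * (bprob q bs * INR (wt bs)) + (INR n * q)^2 * bprob q bs))) by (intros; ring).
  rewrite !sumR_plus, !sumR_scal, moment2, moment1, bprob_sum. ring. Qed.

Lemma pushforward {X Y : Type} (XA : list X) (YA : list Y) (pmf : X -> Y -> R) (f : X -> Y -> bool) (pi : R)
  (hsum : forall H : bool -> R, sumR (fun x => sumR (fun y => pmf x y * H (f x y)) YA) XA = pi * H true + (1 - pi) * H false)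
  n : forall (G : list bool -> R),
  sumR (fun xs => sumR (fun ys => seq_prob pmf xs ys * G (map (fun xy => f (fst xy) (snd xy)) (combine xs ys))) (all_seqs YA n)) (all_seqs XA n)
  = sumR (fun bs => bprob pi bs * G bs) (all_seqs BA n).
Proof.
  induction n; intros G.
  - simpl. unfold seq_prob, bprob, sumR. simpl. ring.
  - rewrite sumB_S, sumR_all_seqs_S. simpl bprob.
    rewrite (sumR_ext _ (fun x => sumR (fun y => pmf x y * (fun b => sumR (fun xs => sumR (fun ys => seq_prob pmf xs ys * G (b :: map (fun xy => f (fst xy) (snd xy)) (combine xs ys))) (all_seqs YA n)) (all_seqs XA n)) (f x y)) YA)).
    2:{ intros x. rewrite (sumR_ext _ (fun xs => sumR (fun y => sumR (fun ys => pmf x y * (seq_prob pmf xs ys * G (f x y :: map (fun xy => f (fst xy) (snd xy)) (combine xs ys)))) (all_seqs YA n)) YA)).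
        2:{ intros xs. rewrite sumR_all_seqs_S. apply sumR_ext; intros y; apply sumR_ext; intros ys. unfold seq_prob; simpl; ring. }
        rewrite sumR_swap. apply sumR_ext; intros y.
        rewrite <- sumR_scal. apply sumR_ext; intros xs.
        rewrite <- sumR_scal. reflexivity. }
    rewrite (hsum (fun b => sumR (fun xs => sumR (fun ys => seq_prob pmf xs ys * G (b :: map (fun xy => f (fst xy) (snd xy)) (combine xs ys))) (all_seqs YA n)) (all_seqs XA n))). pose proof (IHn (fun l => G (true :: l))) as E1; pose proof (IHn (fun l => G (false :: l))) as E2; cbv beta in E1, E2; rewrite E1, E2.
    rewrite <- !sumR_scal. rewrite Rplus_comm. f_equal; apply sumR_ext; intros; ring.
Qed.

Definition He (x : R) : R := - (x * ln x) - (1 - x) * ln (1 - x).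

Fixpoint bin (m k : nat) : nat :=
  match m, k with
  | _, O => 1%nat
  | O, S _ => 0%nat
  | S m', S k' => (bin m' k' + bin m' (S k'))%nat
  end.

Lemma bin_gt m k : (m < k)%nat -> bin m k = 0%nat.
Proof. revert k; induction m; intros [|k] H; simpl; try lia. rewrite !IHm; lia. Qed.

Lemma C_n_0 m : C m 0 = 1.
Proof. unfold C. rewrite Nat.sub_0_r. simpl. field. apply INR_fact_neq_0. Qed.
Lemma C_n_n m : C m m = 1.
Proof. unfold C. rewrite Nat.sub_diag. simpl. field. apply INR_fact_neq_0. Qed.

Lemma bin_C m k : (k <= m)%nat -> INR (bin m k) = C m k.
Proof.
  revert k; induction m; intros k Hk.
  - assert (k = 0%nat) by lia; subst. simpl. rewrite C_n_0; reflexivity.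
  - destruct k. { simpl. rewrite C_n_0; reflexivity. }
    simpl bin. rewrite plus_INR.
    destruct (Nat.eq_dec k m).
    + subst. rewrite (bin_gt m (S m)) by lia. rewrite IHm by lia. rewrite !C_n_n. simpl; ring.
    + rewrite !IHm by lia. apply pascal. lia.
Qed.

Lemma argmax_nat (g : nat -> R) m : exists k0, (k0 <= m)%nat /\ forall k, (k <= m)%nat -> g k <= g k0.
Proof.
  induction m.
  - exists 0%nat. split; auto. intros k Hk. assert (k = 0%nat) by lia; subst; lra.
  - destruct IHm as [k0 [Hk0 H]]. destruct (Rle_dec (g (S m)) (g k0)).
    + exists k0. split; [lia|]. intros k Hk. destruct (Nat.eq_dec k (S m)); [subst; auto|]. apply H; lia.
    + exists (S m). split; [lia|]. intros k Hk. destruct (Nat.eq_dec k (S m)); [subst; lra|].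
      specialize (H k ltac:(lia)). lra.
Qed.

Lemma sum_f_le_max (g : nat -> R) m c : (forall k, (k <= m)%nat -> g k <= c) -> sum_f_R0 g m <= (INR m + 1) * c.
Proof.
  induction m; intros H.
  - specialize (H 0%nat (le_n _)). simpl. lra.
  - rewrite S_INR. replace (sum_f_R0 g (S m)) with (sum_f_R0 g m + g (S m)) by reflexivity. assert (sum_f_R0 g m <= (INR m + 1) * c) by (apply IHm; intros; apply H; lia).
    specialize (H (S m) (le_n _)). lra.
Qed.

Lemma binom_lb (be : R) : 0 <= be < 1 -> exists c, 0 <= c /\ forall m : nat, exists k : nat,
  (k <= m)%nat /\ Rabs (INR k - be * INR m) <= 1 /\ INR m * He be - ln (INR m + 1) - c <= ln (INR (bin m k)).
Proof.
  intros [Hb0 Hb1]. destruct (Req_dec be 0) as [->|Hbne].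
  - exists 0. split; [lra|]. intros m. exists 0%nat. split; [lia|]. split.
    + simpl. rewrite Rmult_0_l, Rminus_0_r, Rabs_R0. lra.
    + unfold He. replace (bin m 0) with 1%nat by (destruct m; reflexivity). simpl INR. replace (1 - 0) with 1 by ring. rewrite ln_1.
      assert (0 <= ln (INR m + 1)). { rewrite <- ln_1. destruct (Req_dec (INR m) 0) as [E|E].
        - rewrite E, Rplus_0_l. lra.
        - left; apply ln_increasing; [lra|]. pose proof (pos_INR m). lra. }
      lra.
  - assert (Hb : 0 < be) by lra.
    exists (Rabs (ln be - ln (1 - be))). split; [apply Rabs_pos|]. intros m.
    set (T := fun k => C m k * be ^ k * (1 - be) ^ (m - k)).
    assert (Tpos : forall k, (k <= m)%nat -> 0 < T k).
    { intros k Hk. unfold T. rewrite <- bin_C by auto. apply Rmult_lt_0_compat; [apply Rmult_lt_0_compat|]; try (apply pow_lt; lra).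
      apply lt_0_INR. clear T. revert k Hk. induction m; intros [|k] Hk; simpl; try lia.
      assert (0 < bin m k)%nat by (apply IHm; lia). lia. }
    assert (Tsum : sum_f_R0 T m = 1).
    { unfold T. rewrite <- binomial. replace (be + (1 - be)) with 1 by ring. apply pow1. }
    assert (Trat : forall i, (i < m)%nat -> T (S i) * (INR i + 1) * (1 - be) = (INR m - INR i) * be * T i).
    { intros i Hi. unfold T. rewrite pascal_step3 by auto. rewrite minus_INR by lia. rewrite S_INR.
      replace (m - i)%nat with (S (m - S i)) by lia. simpl pow. field. pose proof (pos_INR i); lra. }
    destruct (argmax_nat T m) as [k0 [Hk0 Hmax]].
    exists k0. split; [auto|].
    assert (Tk0 : 1 <= (INR m + 1) * T k0). { assert (sum_f_R0 T m <= (INR m + 1) * T k0) by (apply sum_f_le_max; auto). lra. }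
    assert (Habs : Rabs (INR k0 - be * INR m) <= 1).
    { apply Rabs_le. split.
      * destruct (Rle_dec (be * INR m - 1) (INR k0)) as [E|E]; [lra|exfalso].
        assert (k0 < m)%nat. { apply INR_lt. assert (be * INR m <= INR m) by (pose proof (pos_INR m); nra). lra. }
        specialize (Trat k0 H). specialize (Hmax (S k0) ltac:(lia)). pose proof (Tpos k0 Hk0).
        assert ((INR m - INR k0) * be > (INR k0 + 1) * (1 - be)) by nra.
        assert (T (S k0) * (INR k0 + 1) * (1 - be) > (INR k0 + 1) * (1 - be) * T k0) by nra.
        pose proof (pos_INR k0). assert ((INR k0 + 1) * (1 - be) * T (S k0) <= (INR k0 + 1) * (1 - be) * T k0) by (apply Rmult_le_compat_l; nra). lra.
      * destruct (Rle_dec (INR k0) (be * INR m + 1)) as [E|E]; [lra|exfalso].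
        destruct k0 as [|i]. { simpl in E. pose proof (pos_INR m). nra. }
        rewrite S_INR in E.
        specialize (Trat i ltac:(lia)). specialize (Hmax i ltac:(lia)). pose proof (Tpos (S i) Hk0).
        assert ((INR m - INR i) * be < (INR i + 1) * (1 - be)) by nra.
        pose proof (pos_INR i). assert (INR i < INR m) by (apply lt_INR; lia).
        assert ((INR m - INR i) * be * T i <= (INR m - INR i) * be * T (S i)) by (apply Rmult_le_compat_l; nra).
        assert ((INR m - INR i) * be * T (S i) < (INR i + 1) * (1 - be) * T (S i)) by (apply Rmult_lt_compat_r; lra).
        lra. }
    split; [exact Habs|].
    assert (HT : ln (T k0) >= - ln (INR m + 1)).
      { pose proof (Tpos k0 Hk0). assert (0 < INR m + 1) by (pose proof (pos_INR m); lra).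
        rewrite <- ln_Rinv by lra. apply Rle_ge. destruct (Req_dec (/ (INR m + 1)) (T k0)) as [E|E]; [rewrite E; lra|].
        left. apply ln_increasing. apply Rinv_0_lt_compat; lra.
        assert (/ (INR m + 1) <= T k0). { apply (Rmult_le_reg_l (INR m + 1)); [lra|]. rewrite Rinv_r; lra. } lra. }
      assert (HlnT : ln (T k0) = ln (INR (bin m k0)) + INR k0 * ln be + INR (m - k0) * ln (1 - be)).
      { unfold T. rewrite <- bin_C by auto.
        assert (0 < INR (bin m k0)). { pose proof (Tpos k0 Hk0). unfold T in H. rewrite <- bin_C in H by auto.
          assert (0 < be ^ k0) by (apply pow_lt; lra). assert (0 < (1-be) ^ (m - k0)) by (apply pow_lt; lra).
          destruct (Rle_dec (INR (bin m k0)) 0); [|lra]. pose proof (pos_INR (bin m k0)).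
          assert (INR (bin m k0) = 0) by lra. rewrite H3 in H. lra. }
        rewrite !ln_mult; try (apply pow_lt; lra); try lra.
        - rewrite !ln_pow by lra. ring.
        - apply Rmult_lt_0_compat; [lra| apply pow_lt; lra]. }
      rewrite minus_INR in HlnT by auto.
      set (L := ln be - ln (1 - be)) in *.
      assert (INR m * He be = INR k0 * (- ln be) + (INR m - INR k0) * (- ln (1 - be)) + (INR k0 - be * INR m) * L).
      { unfold He, L. ring. }
      assert (Rabs ((INR k0 - be * INR m) * L) <= Rabs L).
      { rewrite Rabs_mult. pose proof (Rabs_pos L). nra. }
      pose proof (Rle_abs ((INR k0 - be * INR m) * L)). lra.
Qed.

Local Open Scope bool_scope.

Fixpoint f10 (x c : list bool) : nat :=
  match x, c with b :: x', d :: c' => ((if b then (if d then 0 else 1) else 0) + f10 x' c')%nat | _, _ => 0%nat end.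
Fixpoint f01 (x c : list bool) : nat :=
  match x, c with b :: x', d :: c' => ((if b then 0 else (if d then 1 else 0)) + f01 x' c')%nat | _, _ => 0%nat end.
Fixpoint hdist (x c : list bool) : nat :=
  match x with [] => 0%nat | b :: x' => ((if Bool.eqb b (hd false c) then 0 else 1) + hdist x' (tl c))%nat end.
Definition cnt {T} (P : T -> bool) (l : list T) : nat := length (filter P l).

Lemma cnt_ext {T} (P Q : T -> bool) l : (forall a, P a = Q a) -> cnt P l = cnt Q l.
Proof. unfold cnt; induction l; simpl; intros H; auto. rewrite H. destruct (Q a); simpl; auto. Qed.
Lemma cnt_app {T} (P : T -> bool) l1 l2 : cnt P (l1 ++ l2) = (cnt P l1 + cnt P l2)%nat.
Proof. unfold cnt. rewrite filter_app, length_app. auto. Qed.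
Lemma cnt_map {T U} (P : U -> bool) (h : T -> U) l : cnt P (map h l) = cnt (fun a => P (h a)) l.
Proof. unfold cnt; induction l; simpl; auto. destruct (P (h a)); simpl; auto. Qed.
Lemma cnt_false {T} (l : list T) : cnt (fun _ => false) l = 0%nat.
Proof. unfold cnt; induction l; simpl; auto. Qed.
Lemma cnt_false_ext {T} (P : T -> bool) l : (forall a, P a = false) -> cnt P l = 0%nat.
Proof. intros H. rewrite (cnt_ext P (fun _ => false)) by auto. apply cnt_false. Qed.
Lemma cnt_le_length {T} (P : T -> bool) l : (cnt P l <= length l)%nat.
Proof. unfold cnt; induction l; simpl; auto. destruct (P a); simpl; lia. Qed.
Lemma cnt_mono {T} (P Q : T -> bool) l : (forall a, P a = true -> Q a = true) -> (cnt P l <= cnt Q l)%nat.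
Proof. unfold cnt; induction l; simpl; intros H; auto. specialize (IHl H). destruct (P a) eqn:E.
  - rewrite (H a E). simpl. lia.
  - destruct (Q a); simpl; lia. Qed.
Lemma cnt_all_S n (P : list bool -> bool) :
  cnt P (all_seqs BA (S n)) = (cnt (fun c => P (false :: c)) (all_seqs BA n) + cnt (fun c => P (true :: c)) (all_seqs BA n))%nat.
Proof. simpl. rewrite app_nil_r, cnt_app, !cnt_map. reflexivity. Qed.

Lemma wt_le x : (wt x <= length x)%nat.
Proof. induction x; simpl; auto. destruct a; lia. Qed.

Lemma count_pat x : forall i j,
  cnt (fun c => (f10 x c =? i) && (f01 x c =? j)) (all_seqs BA (length x)) = (bin (wt x) i * bin (length x - wt x) j)%nat.
Proof.
  induction x as [|b x IH]; intros i j.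
  - simpl. unfold cnt. destruct i, j; reflexivity.
  - simpl length. rewrite cnt_all_S. destruct b.
    + simpl f10; simpl f01. simpl wt. replace (S (length x) - S (wt x))%nat with (length x - wt x)%nat by lia.
      destruct i as [|i].
      * replace (cnt (fun c => (S (f10 x c) =? 0) && (f01 x c =? j)) (all_seqs BA (length x))) with 0%nat
          by (symmetry; apply cnt_false_ext; reflexivity).
        rewrite IH. destruct (wt x); simpl; lia.
      * replace (cnt (fun c => (S (f10 x c) =? S i) && (f01 x c =? j)) (all_seqs BA (length x)))
          with (cnt (fun c => (f10 x c =? i) && (f01 x c =? j)) (all_seqs BA (length x))) by (apply cnt_ext; reflexivity).
        rewrite !IH. simpl bin. lia.
    + simpl f10; simpl f01. simpl wt. pose proof (wt_le x).
      replace (S (length x) - wt x)%nat with (S (length x - wt x)) by lia.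
      destruct j as [|j].
      * replace (cnt (fun c => (f10 x c =? i) && (S (f01 x c) =? 0)) (all_seqs BA (length x))) with 0%nat
          by (symmetry; apply cnt_false_ext; intros; rewrite Bool.andb_false_r; reflexivity).
        rewrite IH. destruct (length x - wt x)%nat; simpl; lia.
      * replace (cnt (fun c => (f10 x c =? i) && (S (f01 x c) =? S j)) (all_seqs BA (length x)))
          with (cnt (fun c => (f10 x c =? i) && (f01 x c =? j)) (all_seqs BA (length x))) by (apply cnt_ext; reflexivity).
        rewrite !IH. simpl bin. lia.
Qed.

Lemma pat_props x : forall c, length c = length x ->
  hdist x c = (f10 x c + f01 x c)%nat /\ (wt c + f10 x c = wt x + f01 x c)%nat.
Proof.
  induction x as [|b x IH]; intros [|d c] Hl; simpl in Hl; try lia.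
  - simpl; auto.
  - destruct (IH c ltac:(lia)) as [H1 H2]. simpl. destruct b, d; simpl; lia.
Qed.

Lemma hdist_le x c : (hdist x c <= length x)%nat.
Proof. revert c; induction x; simpl; intros c; auto. specialize (IHx (tl c)). destruct (Bool.eqb a (hd false c)); lia. Qed.

Lemma hdist_nil x : hdist x [] = wt x.
Proof. induction x; simpl; auto. rewrite IHx. destruct a; reflexivity. Qed.

Lemma sum_idx_shift {T} (g : nat -> T -> R) k l : sum_idx g (S k) l = sum_idx (fun j => g (S j)) k l.
Proof. revert k; induction l; simpl; intros; auto. rewrite IHl. reflexivity. Qed.

Lemma sum_idx_hdist x : forall c, sum_idx (fun j b => hamming b (nth j c false)) 0 x = INR (hdist x c).
Proof.
  induction x as [|b x IH]; intros c; simpl; [reflexivity|].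
  rewrite sum_idx_shift. rewrite plus_INR.
  replace (sum_idx (fun j b0 => hamming b0 (nth (S j) c false)) 0 x) with (INR (hdist x (tl c))).
  - destruct c as [|d c]; simpl; unfold hamming; destruct b; try destruct d; simpl; ring.
  - rewrite <- IH. destruct c; simpl; auto.
    clear IH. generalize 0%nat. induction x; simpl; auto. intros k. rewrite IHx. destruct k; reflexivity.
Qed.

Lemma sum_idx_map {T U} (g : nat -> U -> R) (h : T -> U) k l : sum_idx g k (map h l) = sum_idx (fun j a => g j (h a)) k l.
Proof. revert k; induction l; simpl; intros; auto. rewrite IHl; reflexivity. Qed.

Lemma cnt_sumR {T} (P : T -> bool) l : INR (cnt P l) = sumR (fun a => if P a then 1 else 0) l.
Proof. unfold cnt; induction l; simpl; auto. destruct (P a); simpl length; [rewrite S_INR|]; rewrite IHl; ring. Qed.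

Lemma above_avg {T} (g : T -> R) l : l <> [] -> exists c, In c l /\ sumR g l <= INR (length l) * g c.
Proof.
  induction l as [|a l IH]; intros H; [congruence|].
  destruct l as [|b l'].
  - exists a. simpl. split; auto. lra.
  - destruct (IH ltac:(congruence)) as [c [Hc Hs]].
    destruct (Rle_dec (g c) (g a)).
    + exists a. split; [left; auto|]. rewrite sumR_cons. change (length (a :: b :: l')) with (S (length (b :: l'))). rewrite S_INR.
      assert (INR (length (b :: l')) * g c <= INR (length (b :: l')) * g a) by (apply Rmult_le_compat_l; [apply pos_INR| auto]). lra.
    + exists c. split; [right; auto|]. rewrite sumR_cons. change (length (a :: b :: l')) with (S (length (b :: l'))). rewrite S_INR. lra.
Qed.

Lemma filter_neg_len {T} (P : T -> bool) l : (length (filter (fun x => negb (P x)) l) + cnt P l)%nat = length l.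
Proof. unfold cnt; induction l; simpl; auto. destruct (P a); simpl; lia. Qed.

Lemma cover {T} (rel : T -> T -> bool) (Tl : list T) (a : R) : 0 < a -> forall K (S : list T),
  (forall x, In x S -> a <= INR (cnt (rel x) Tl)) ->
  INR (length S) * (1 - a / INR (length Tl)) ^ K < 1 ->
  exists Cl, (length Cl <= K)%nat /\ forall x, In x S -> exists c, In c Cl /\ rel x c = true.
Proof.
  intros Ha K. induction K as [|K IH]; intros S Hdeg Hsz.
  - exists []. split; [simpl; lia|]. destruct S as [|s S].
    + intros x [].
    + simpl length in Hsz. rewrite S_INR in Hsz. simpl in Hsz. pose proof (pos_INR (length S)). lra.
  - destruct S as [|s S0].
    + exists []. split; [simpl; lia|]. intros x [].
    + set (S := s :: S0) in *.
      assert (HT : (0 < length Tl)%nat).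
      { specialize (Hdeg s (or_introl eq_refl)). pose proof (cnt_le_length (rel s) Tl).
        destruct (length Tl); [|lia]. assert (cnt (rel s) Tl = 0%nat) by lia. rewrite H0 in Hdeg. simpl in Hdeg. lra. }
      assert (HTr : 0 < INR (length Tl)) by (apply lt_0_INR; auto).
      assert (Hu1 : a <= INR (length Tl)).
      { specialize (Hdeg s (or_introl eq_refl)). pose proof (cnt_le_length (rel s) Tl). apply le_INR in H. lra. }
      set (u := a / INR (length Tl)) in *.
      assert (Hu : 0 < u <= 1). { unfold u. split. apply Rdiv_lt_0_compat; lra.
        apply (Rmult_le_reg_r (INR (length Tl))); auto. unfold Rdiv. rewrite Rmult_assoc, Rinv_l; lra. }
      assert (Hdc : sumR (fun c => INR (cnt (fun x => rel x c) S)) Tl >= a * INR (length S)).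
      { rewrite (sumR_ext _ (fun c => sumR (fun x => if rel x c then 1 else 0) S)) by (intros; apply cnt_sumR).
        rewrite <- sumR_swap. rewrite (Rmult_comm a), <- sumR_const.
        apply Rle_ge. apply sumR_le_in. intros x Hx. rewrite <- cnt_sumR. auto. }
      assert (TlNE : Tl <> []) by (destruct Tl; simpl in HT; [lia|congruence]).
      destruct (above_avg (fun c => INR (cnt (fun x => rel x c) S)) Tl TlNE) as [c [Hc Hcs]].
      set (S' := filter (fun x => negb (rel x c)) S).
      assert (HS' : INR (length S') <= INR (length S) * (1 - u)).
      { pose proof (filter_neg_len (fun x => rel x c) S) as E. fold S' in E.
        assert (INR (length S') = INR (length S) - INR (cnt (fun x => rel x c) S)).
        { assert (INR (length S') + INR (cnt (fun x => rel x c) S) = INR (length S)) by (rewrite <- plus_INR; apply f_equal; exact E). lra. }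
        rewrite H. unfold u.
        assert (INR (length S) * a <= INR (length Tl) * INR (cnt (fun x : T => rel x c) S)) by lra.
        assert (INR (length S) * a / INR (length Tl) <= INR (cnt (fun x : T => rel x c) S)).
        { apply (Rmult_le_reg_r (INR (length Tl))); auto. unfold Rdiv. rewrite Rmult_assoc, Rinv_l; lra. }
        unfold Rdiv in *. lra. }
      destruct (IH S') as [Cl [HCl Hcov]].
      { intros x Hx. apply Hdeg. unfold S' in Hx. apply filter_In in Hx. tauto. }
      { assert (0 <= (1 - u) ^ K) by (apply pow_le; lra).
        apply Rle_lt_trans with (INR (length S) * (1 - u) * (1 - u) ^ K).
        - apply Rmult_le_compat_r; auto.
        - replace (INR (length S) * (1 - u) * (1 - u) ^ K) with (INR (length S) * (1 - u) ^ (Datatypes.S K)) by (simpl; ring). exact Hsz. }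
      exists (c :: Cl). split; [simpl; lia|].
      intros x Hx. destruct (rel x c) eqn:E.
      * exists c. split; [left; reflexivity| exact E].
      * destruct (Hcov x) as [c' [H1 H2]].
        { unfold S'. apply filter_In. rewrite E. auto. }
        exists c'. split; [right; exact H1| exact H2].
Qed.

Lemma cnt_mono_in {T} (P Q : T -> bool) l : (forall a, In a l -> P a = true -> Q a = true) -> (cnt P l <= cnt Q l)%nat.
Proof. unfold cnt; induction l; simpl; intros H; auto.
  assert (IH := IHl (fun b Hb => H b (or_intror Hb))). destruct (P a) eqn:E.
  - rewrite (H a (or_introl eq_refl) E). simpl. lia.
  - destruct (Q a); simpl; lia. Qed.

Lemma cnt_filter {T} (P Q : T -> bool) l : cnt P (filter Q l) = cnt (fun a => Q a && P a) l.
Proof. unfold cnt; induction l; simpl; auto. destruct (Q a); simpl; auto. destruct (P a); simpl; auto. Qed.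

Lemma bprob_wt r c : bprob r c = r ^ (wt c) * (1 - r) ^ (length c - wt c).
Proof. induction c; simpl; [ring|]. rewrite IHc. pose proof (wt_le c). destruct a.
  - simpl. ring.
  - simpl (0 + wt c)%nat. replace (match wt c with | 0 => S (length c) | S l => length c - l end)%nat with (S (length c - wt c)) by (destruct (wt c); lia).
    simpl. ring. Qed.

Lemma exp_pow x k : exp x ^ k = exp (INR k * x).
Proof. induction k; simpl. rewrite Rmult_0_l, exp_0; ring. rewrite IHk, <- exp_plus. f_equal. destruct k; simpl; ring. Qed.

Lemma Tv_bound r n v : 0 < r < 1 ->
  INR (length (filter (fun c => wt c =? v) (all_seqs BA n))) * (r ^ v * (1 - r) ^ (n - v)) <= 1.
Proof.
  intros Hr. apply Rle_trans with (sumR (bprob r) (all_seqs BA n)); [|rewrite bprob_sum; lra]. rewrite <- sumR_const.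
  rewrite (sumR_ext_in _ (bprob r)).
  - rewrite sumR_filter. apply sumR_le_in. intros c _. destruct (wt c =? v); [lra|]. apply bprob_nonneg; lra.
  - intros c Hc. apply filter_In in Hc. destruct Hc as [Hc E]. apply Nat.eqb_eq in E.
    apply in_all_seqs in Hc. destruct Hc as [Hl _]. rewrite bprob_wt, Hl, E. reflexivity.
Qed.

Lemma nat_ceil (x : R) : 0 <= x -> exists k : nat, x <= INR k <= x + 1.
Proof.
  intros Hx. destruct (archimed x) as [H1 H2].
  assert (0 <= up x)%Z. { apply le_IZR. simpl. lra. }
  exists (Z.to_nat (up x)). rewrite INR_IZR_INZ, Z2Nat.id by auto. lra.
Qed.

Lemma ln2_lt1 : ln 2 < 1.
Proof. rewrite <- (ln_exp 1). apply ln_increasing; [lra|]. pose proof (exp_ineq1 1 ltac:(lra)). lra. Qed.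
Lemma ln2_pos : 0 < ln 2.
Proof. rewrite <- ln_1. apply ln_increasing; lra. Qed.

Lemma pow2_exp n : 2 ^ n = exp (INR n * ln 2).
Proof. rewrite <- ln_pow by lra. rewrite exp_ln; auto. apply pow_lt; lra. Qed.

Lemma cover_count {T} (rel : T -> T -> bool) (Tl S : list T) (a : R) (n : nat) :
  1 <= a -> (INR (length S) <= 2 ^ n) ->
  (forall x, In x S -> a <= INR (cnt (rel x) Tl)) ->
  exists Cl, INR (length Cl) <= INR (length Tl) * INR n / a + 2 /\ forall x, In x S -> exists c, In c Cl /\ rel x c = true.
Proof.
  intros Ha HS Hdeg.
  destruct (Nat.eq_dec (length Tl) 0) as [E|E].
  - destruct S as [|s S0].
    + exists []. split. simpl. assert (0 <= INR (length Tl) * INR n / a). { unfold Rdiv. apply Rmult_le_pos; [apply Rmult_le_pos; apply pos_INR| left; apply Rinv_0_lt_compat; lra]. } lra.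
      intros x [].
    + exfalso. specialize (Hdeg s (or_introl eq_refl)). pose proof (cnt_le_length (rel s) Tl). rewrite E in H.
      assert (cnt (rel s) Tl = 0%nat) by lia. rewrite H0 in Hdeg. simpl in Hdeg. lra.
  - assert (HT : 0 < INR (length Tl)) by (apply lt_0_INR; lia).
    assert (Hx : 0 <= INR (length Tl) * INR n / a).
    { unfold Rdiv. apply Rmult_le_pos; [apply Rmult_le_pos; apply pos_INR| left; apply Rinv_0_lt_compat; lra]. }
    destruct (nat_ceil _ Hx) as [k Hk].
    destruct (cover rel Tl a ltac:(lra) (Datatypes.S k) S Hdeg) as [Cl [HCl Hcov]].
    + set (u := a / INR (length Tl)).
      destruct S as [|s S0]. { simpl. lra. }
      assert (Hu1 : a <= INR (length Tl)).
      { specialize (Hdeg s (or_introl eq_refl)). pose proof (cnt_le_length (rel s) Tl). apply le_INR in H. lra. }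
      assert (Hu : 0 < u <= 1). { unfold u. split. apply Rdiv_lt_0_compat; lra.
        apply (Rmult_le_reg_r (INR (length Tl))); auto. unfold Rdiv. rewrite Rmult_assoc, Rinv_l; lra. }
      assert (H1 : (1 - u) ^ Datatypes.S k <= exp (- u) ^ Datatypes.S k). { apply pow_incr. split; [lra|]. pose proof (exp_ineq1_le (- u)). lra. }
      rewrite exp_pow in H1.
      assert (H2 : INR (Datatypes.S k) * u > INR n).
      { rewrite S_INR. unfold u. assert (INR k * (a / INR (length Tl)) >= INR n).
        { apply Rle_ge. apply (Rmult_le_reg_r (INR (length Tl) / a)). apply Rdiv_lt_0_compat; lra.
          replace (INR k * (a / INR (length Tl)) * (INR (length Tl) / a)) with (INR k) by (field; lra).
          unfold Rdiv in *. lra. }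
        assert (0 < a / INR (length Tl)) by (apply Rdiv_lt_0_compat; lra). lra. }
      assert (H3 : exp (INR (Datatypes.S k) * - u) < exp (- (INR n * ln 2))).
      { apply exp_increasing. pose proof ln2_lt1. pose proof ln2_pos. pose proof (pos_INR n).
        assert (INR n * ln 2 <= INR n) by nra. nra. }
      assert (H4 : 2 ^ n * exp (- (INR n * ln 2)) = 1).
      { rewrite pow2_exp, <- exp_plus. replace (INR n * ln 2 + - (INR n * ln 2)) with 0 by ring. apply exp_0. }
      assert (0 <= (1 - u) ^ Datatypes.S k) by (apply pow_le; lra).
      apply Rle_lt_trans with (2 ^ n * exp (INR (Datatypes.S k) * - u)).
      * apply Rmult_le_compat; auto; apply pos_INR.
      * rewrite <- H4. apply Rmult_lt_compat_l; auto. apply pow_lt; lra.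
    + exists Cl. split; auto. apply le_INR in HCl. rewrite S_INR in HCl. lra.
Qed.

Definition rpar q D := (q - D) / (1 - 2 * D).
Definition bpar q D := (1 - rpar q D) * D / q.
Definition gpar q D := rpar q D * D / (1 - q).

Lemma He0 : He 0 = 0.
Proof. unfold He. replace (1 - 0) with 1 by ring. rewrite ln_1. ring. Qed.

Lemma ln_frac x y z : 0 < x -> 0 < y -> 0 < z -> ln (x * y / z) = ln x + ln y - ln z.
Proof. intros. unfold Rdiv. rewrite ln_mult, ln_mult, ln_Rinv; try lra.
  apply Rmult_lt_0_compat; lra. apply Rinv_0_lt_compat; lra. Qed.

Lemma params q D : 0 < q -> q <= / 2 -> 0 <= D < q ->
  0 < rpar q D < 1 /\ 0 <= bpar q D < 1 /\ 0 <= gpar q D < 1 /\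
  q * bpar q D + (1 - q) * gpar q D = D /\ q * (1 - bpar q D) + (1 - q) * gpar q D = rpar q D /\
  He (rpar q D) - q * He (bpar q D) - (1 - q) * He (gpar q D) = He q - He D.
Proof.
  intros Hq Hq2 [HD0 HDq].
  assert (Hd : 0 < 1 - 2 * D) by lra.
  assert (Hr : 0 < rpar q D < 1).
  { unfold rpar. split. apply Rdiv_lt_0_compat; lra.
    apply (Rmult_lt_reg_r (1 - 2 * D)); auto. unfold Rdiv. rewrite Rmult_assoc, Rinv_l; lra. }
  assert (Hqr : q = rpar q D * (1 - 2 * D) + D) by (unfold rpar; field; lra).
  set (r := rpar q D) in *.
  assert (Hb : 0 <= bpar q D < 1).
  { unfold bpar; fold r. split.
    - unfold Rdiv. apply Rmult_le_pos; [nra| left; apply Rinv_0_lt_compat; lra].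
    - apply (Rmult_lt_reg_r q); auto. unfold Rdiv. rewrite Rmult_assoc, Rinv_l; nra. }
  assert (Hg : 0 <= gpar q D < 1).
  { unfold gpar; fold r. split.
    - unfold Rdiv. apply Rmult_le_pos; [nra| left; apply Rinv_0_lt_compat; lra].
    - apply (Rmult_lt_reg_r (1 - q)); [lra|]. unfold Rdiv. rewrite Rmult_assoc, Rinv_l; nra. }
  assert (E1 : q * bpar q D + (1 - q) * gpar q D = D).
  { unfold bpar, gpar; fold r.
    assert (q * ((1 - r) * D / q) = (1 - r) * D) by (field; lra).
    assert ((1 - q) * (r * D / (1 - q)) = r * D) by (field; lra). lra. }
  assert (E2 : q * (1 - bpar q D) + (1 - q) * gpar q D = r).
  { unfold bpar, gpar; fold r.
    assert (q * (1 - (1 - r) * D / q) = q - (1 - r) * D) by (field; lra).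
    assert ((1 - q) * (r * D / (1 - q)) = r * D) by (field; lra). rewrite H, H0. rewrite Hqr. ring. }
  repeat split; try lra.
  destruct (Req_dec D 0) as [->|HD].
  - unfold bpar, gpar. fold r. rewrite !Rmult_0_r, !Rdiv_0_l, He0.
    replace r with q by (rewrite Hqr; ring). ring.
  - assert (HD1 : 0 < D) by lra.
    set (b := bpar q D) in *. set (g := gpar q D) in *.
    assert (Eb : b = (1 - r) * D / q) by reflexivity.
    assert (Eg : g = r * D / (1 - q)) by reflexivity.
    assert (Qb : q * b = (1 - r) * D) by (rewrite Eb; field; lra).
    assert (Qg : (1 - q) * g = r * D) by (rewrite Eg; field; lra).
    assert (Eb1 : 1 - b = r * (1 - D) / q).
    { apply (Rmult_eq_reg_l q); [|lra]. replace (q * (r * (1 - D) / q)) with (r * (1 - D)) by (field; lra). nra. }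
    assert (Eg1 : 1 - g = (1 - r) * (1 - D) / (1 - q)).
    { apply (Rmult_eq_reg_l (1 - q)); [|lra]. replace ((1 - q) * ((1 - r) * (1 - D) / (1 - q))) with ((1 - r) * (1 - D)) by (field; lra). nra. }
    assert (L1 : ln b = ln (1 - r) + ln D - ln q).
    { rewrite Eb. apply ln_frac; lra. }
    assert (L2 : ln (1 - b) = ln r + ln (1 - D) - ln q).
    { rewrite Eb1. apply ln_frac; lra. }
    assert (L3 : ln g = ln r + ln D - ln (1 - q)).
    { rewrite Eg. apply ln_frac; lra. }
    assert (L4 : ln (1 - g) = ln (1 - r) + ln (1 - D) - ln (1 - q)).
    { rewrite Eg1. apply ln_frac; lra. }
    unfold He. rewrite L1, L2, L3, L4.
    rewrite Eb1, Eg1. rewrite Eb, Eg.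
    set (a1 := ln q). set (a2 := ln (1 - q)). set (a3 := ln r). set (a4 := ln (1 - r)). set (a5 := ln D). set (a6 := ln (1 - D)).
    assert (Hq1 : 1 - q <> 0) by lra.
    clearbody a1 a2 a3 a4 a5 a6. clear L1 L2 L3 L4 Eb Eg Eb1 Eg1. clearbody b g r.
    subst q. field. split; lra.
Qed.

Lemma Rabs_le_between x b : Rabs x <= b -> - b <= x <= b.
Proof. intros H. pose proof (Rle_abs x). pose proof (Rle_abs (- x)). rewrite Rabs_Ropp in H1. lra. Qed.

Lemma bin_pos m k : (k <= m)%nat -> (1 <= bin m k)%nat.
Proof. revert k; induction m; intros [|k] Hk; simpl; try lia. assert (1 <= bin m k)%nat by (apply IHm; lia). lia. Qed.

Lemma wt_app x y : wt (x ++ y) = (wt x + wt y)%nat.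
Proof. induction x; simpl; auto. rewrite IHx. lia. Qed.
Lemma wt_repeat b k : wt (repeat b k) = if b then k else 0%nat.
Proof. induction k; simpl; destruct b; auto; rewrite IHk; auto. Qed.

Lemma exists_wt n w : (w <= n)%nat -> exists x, In x (all_seqs BA n) /\ wt x = w.
Proof.
  intros Hw. exists (repeat true w ++ repeat false (n - w)). split.
  - replace n with (length (repeat true w ++ repeat false (n - w))) at 2.
    + apply all_seqs_in. intros a Ha. destruct a; simpl; auto.
    + rewrite length_app, !repeat_length. lia.
  - rewrite wt_app, !wt_repeat. lia.
Qed.

Lemma le_exp_ln x y : 0 < x -> y <= ln x -> exp y <= x.
Proof. intros Hx Hy. rewrite <- (exp_ln x Hx). destruct Hy as [Hy|Hy]; [left; apply exp_increasing; auto| rewrite Hy; lra]. Qed.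

Lemma pow_exp_ln r k : 0 < r -> r ^ k = exp (INR k * ln r).
Proof. intros Hr. rewrite <- exp_pow, exp_ln; auto. Qed.

Lemma ln_le_mono x y : 0 < x -> x <= y -> ln x <= ln y.
Proof. intros Hx [H|H]; [left; apply ln_increasing; auto| rewrite H; lra]. Qed.

Lemma class_cover q D : 0 < q -> q <= / 2 -> 0 <= D < q -> exists K1 K2, 0 <= K1 /\
  forall n w tau, (w <= n)%nat -> D * INR n + Rabs (INR w - q * INR n) + 2 <= INR tau ->
  exists Cl : list (list bool),
    INR (length Cl) <= (INR n + 2) * exp (INR n * (He q - He D) + Rabs (INR w - q * INR n) * K1 + K2 + 2 * ln (INR n + 1)) /\
    forall x, In x (all_seqs BA n) -> wt x = w -> exists c, In c Cl /\ (hdist x c <= tau)%nat.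
Proof.
  intros Hq Hq2 HD.
  destruct (params q D Hq Hq2 HD) as (Hr & Hb & Hg & P4 & P5 & P6).
  set (r := rpar q D) in *. set (b := bpar q D) in *. set (g := gpar q D) in *.
  destruct (binom_lb b Hb) as [c1 [Hc1 Hbl]].
  destruct (binom_lb g Hg) as [c2 [Hc2 Hgl]].
  set (Lr := ln r - ln (1 - r)).
  exists (Rabs (- Lr * (1 - b - g) - He b + He g)), (2 * Rabs Lr + c1 + c2).
  split; [apply Rabs_pos|].
  intros n w tau Hw Htau.
  destruct (Hbl w) as [i [Hi1 [Hi2 Hi3]]].
  destruct (Hgl (n - w)%nat) as [j [Hj1 [Hj2 Hj3]]].
  set (v := (w - i + j)%nat).
  set (Tl := filter (fun c => wt c =? v) (all_seqs BA n)).
  set (S := filter (fun x => wt x =? w) (all_seqs BA n)).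
  set (a := INR (bin w i * bin (n - w) j)).
  assert (Ha : 1 <= a). { unfold a. pose proof (bin_pos w i Hi1). pose proof (bin_pos (n - w) j Hj1).
    rewrite mult_INR. assert (1 <= INR (bin w i)) by (apply (le_INR 1); lia).
    assert (1 <= INR (bin (n - w) j)) by (apply (le_INR 1); lia). nra. }
  rewrite minus_INR in Hj2, Hj3 by auto.
  assert (Hij : (i + j <= tau)%nat).
  { apply INR_le. rewrite plus_INR.
    apply Rabs_le_between in Hi2. apply Rabs_le_between in Hj2.
    assert (b * INR w + g * (INR n - INR w) = (b - g) * (INR w - q * INR n) + D * INR n) by (rewrite <- P4; ring).
    assert ((b - g) * (INR w - q * INR n) <= Rabs (INR w - q * INR n)).
    { apply Rle_trans with (Rabs ((b - g) * (INR w - q * INR n))); [apply Rle_abs|].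
      rewrite Rabs_mult. assert (Rabs (b - g) <= 1) by (apply Rabs_le; lra).
      pose proof (Rabs_pos (INR w - q * INR n)). nra. }
    lra. }
  assert (Hdeg : forall x, In x S -> a <= INR (cnt (fun c => hdist x c <=? tau) Tl)).
  { intros x Hx. unfold S in Hx. apply filter_In in Hx. destruct Hx as [Hx Hxw]. apply Nat.eqb_eq in Hxw.
    destruct (in_all_seqs _ _ _ Hx) as [Hxl _].
    unfold Tl. rewrite cnt_filter. apply le_INR.
    pose proof (count_pat x i j) as Hc. rewrite Hxl, Hxw in Hc. rewrite <- Hc.
    apply cnt_mono_in. intros c Hc' Hp. apply andb_prop in Hp. destruct Hp as [Hp1 Hp2].
    apply Nat.eqb_eq in Hp1. apply Nat.eqb_eq in Hp2.
    destruct (in_all_seqs _ _ _ Hc') as [Hcl _].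
    destruct (pat_props x c ltac:(lia)) as [Hh Hwt].
    apply andb_true_intro. split; apply Nat.eqb_eq || apply Nat.leb_le; unfold v; lia. }
  assert (HS : INR (length S) <= 2 ^ n).
  { unfold S. replace (2 ^ n) with (INR (length (all_seqs BA n))).
    - apply le_INR. pose proof (cnt_le_length (fun x => wt x =? w) (all_seqs BA n)). unfold cnt in H. auto.
    - rewrite length_all_seqs, pow_INR. replace (INR (length BA)) with 2 by (simpl; ring). reflexivity. }
  destruct (cover_count (fun x c => hdist x c <=? tau) Tl S a n Ha HS Hdeg) as [Cl [HCl Hcov]].
  exists Cl. split.
  2:{ intros x Hx Hxw. destruct (Hcov x) as [c [Hc1' Hc2']].
      - unfold S. apply filter_In. split; auto. apply Nat.eqb_eq; auto.
      - exists c. split; auto. apply Nat.leb_le; auto. }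
  destruct (exists_wt n w Hw) as [x0 [Hx0 Hx0w]].
  assert (Hx0S : In x0 S) by (unfold S; apply filter_In; split; auto; apply Nat.eqb_eq; auto).
  assert (HaT : a <= INR (length Tl)).
  { pose proof (Hdeg x0 Hx0S). pose proof (cnt_le_length (fun c => hdist x0 c <=? tau) Tl). apply le_INR in H0. lra. }
  set (A := INR (length Tl)) in *.
  assert (HvN : (v <= n)%nat) by (unfold v; lia).
  assert (HA : A <= exp (- (INR v * ln r + INR (n - v) * ln (1 - r)))).
  { pose proof (Tv_bound r n v Hr) as H. fold Tl A in H.
    rewrite (pow_exp_ln r v), (pow_exp_ln (1 - r) (n - v)) in H by lra. rewrite <- exp_plus in H.
    apply (Rmult_le_reg_r (exp (INR v * ln r + INR (n - v) * ln (1 - r)))). apply exp_pos.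
    rewrite <- exp_plus. replace (- (INR v * ln r + INR (n - v) * ln (1 - r)) + (INR v * ln r + INR (n - v) * ln (1 - r))) with 0 by ring.
    rewrite exp_0. lra. }
  set (Y := (INR w * He b - ln (INR w + 1) - c1) + ((INR n - INR w) * He g - ln (INR n - INR w + 1) - c2)).
  assert (Hay : exp Y <= a).
  { apply le_exp_ln; [lra|]. unfold a. rewrite mult_INR.
    assert (0 < INR (bin w i)) by (apply lt_0_INR; pose proof (bin_pos w i Hi1); lia).
    assert (0 < INR (bin (n - w) j)) by (apply lt_0_INR; pose proof (bin_pos (n - w) j Hj1); lia).
    rewrite ln_mult by auto. unfold Y. lra. }
  assert (HAa : A / a <= exp (- (INR v * ln r + INR (n - v) * ln (1 - r)) - Y)).
  { unfold Rminus at 1. rewrite exp_plus. unfold Rdiv.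
    apply Rmult_le_compat.
    - pose proof (pos_INR (length Tl)); fold A in H; lra.
    - left; apply Rinv_0_lt_compat; lra.
    - exact HA.
    - rewrite exp_Ropp. apply Rinv_le_contravar; [apply exp_pos| exact Hay]. }
  assert (Hexp : - (INR v * ln r + INR (n - v) * ln (1 - r)) - Y <=
     INR n * (He q - He D) + Rabs (INR w - q * INR n) * Rabs (- Lr * (1 - b - g) - He b + He g) + (2 * Rabs Lr + c1 + c2) + 2 * ln (INR n + 1)).
  { assert (EV : INR v = INR w - INR i + INR j) by (unfold v; rewrite plus_INR, minus_INR by auto; ring).
    assert (EnV : INR (n - v) = INR n - INR v) by (apply minus_INR; auto).
    rewrite EnV, EV. unfold Y.
    assert (Hid : - ((INR w - INR i + INR j) * ln r + (INR n - (INR w - INR i + INR j)) * ln (1 - r)) - INR w * He b - (INR n - INR w) * He g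
      = INR n * (He q - He D) + (INR w - q * INR n) * (- Lr * (1 - b - g) - He b + He g) - Lr * ((INR j - g * (INR n - INR w)) - (INR i - b * INR w))).
    { rewrite <- P6. replace (He r) with (- (r * ln r) - (1 - r) * ln (1 - r)) by reflexivity. unfold Lr. clear - P5. clearbody r b g.
      set (lr := ln r) in *. set (lr1 := ln (1 - r)) in *. set (hb := He b). set (hg := He g).
      clearbody lr lr1 hb hg. rewrite <- P5. ring. }
    assert (T1 : (INR w - q * INR n) * (- Lr * (1 - b - g) - He b + He g) <= Rabs (INR w - q * INR n) * Rabs (- Lr * (1 - b - g) - He b + He g)).
    { rewrite <- Rabs_mult. apply Rle_abs. }
    assert (T2 : - Lr * ((INR j - g * (INR n - INR w)) - (INR i - b * INR w)) <= 2 * Rabs Lr).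
    { apply Rle_trans with (Rabs (- Lr * ((INR j - g * (INR n - INR w)) - (INR i - b * INR w)))); [apply Rle_abs|].
      rewrite Rabs_mult, Rabs_Ropp.
      assert (Rabs ((INR j - g * (INR n - INR w)) - (INR i - b * INR w)) <= 2).
      { unfold Rminus at 1. apply Rle_trans with (Rabs (INR j - g * (INR n - INR w)) + Rabs (- (INR i - b * INR w))); [apply Rabs_triang|].
        rewrite Rabs_Ropp. lra. }
      pose proof (Rabs_pos Lr). nra. }
    assert (Hwn : INR w <= INR n) by (apply le_INR; auto).
    assert (T3 : ln (INR w + 1) <= ln (INR n + 1)) by (apply ln_le_mono; pose proof (pos_INR w); lra).
    assert (T4 : ln (INR n - INR w + 1) <= ln (INR n + 1)) by (apply ln_le_mono; pose proof (pos_INR w); lra).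
    lra. }
  assert (HAa1 : 1 <= A / a).
  { apply (Rmult_le_reg_r a); [lra|]. unfold Rdiv. rewrite Rmult_assoc, Rinv_l; lra. }
  apply Rle_trans with (INR (length Tl) * INR n / a + 2); auto.
  fold A. replace (A * INR n / a) with (INR n * (A / a)) by (field; lra).
  apply Rle_trans with ((INR n + 2) * (A / a)).
  { nra. }
  apply Rmult_le_compat_l. pose proof (pos_INR n); lra.
  apply Rle_trans with (1 := HAa). destruct Hexp as [Hexp|Hexp]; [left; apply exp_increasing; auto| rewrite Hexp; lra].
Qed.

Lemma eventually_ge (x : R) : exists N : nat, forall n, (N <= n)%nat -> x <= INR n.
Proof.
  destruct (Rle_dec x 0) as [H|H].
  - exists 0%nat. intros n _. pose proof (pos_INR n). lra.
  - destruct (nat_ceil x ltac:(lra)) as [k Hk]. exists k. intros n Hn. apply le_INR in Hn. lra.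
Qed.

Lemma poly_exp (c K : R) : 0 < c -> 0 <= K -> exists N : nat, forall n, (N <= n)%nat -> K * (INR n + 2) ^ 4 <= exp (c * INR n).
Proof.
  intros Hc HK. set (m := c / 5). assert (Hm : 0 < m) by (unfold m; lra).
  destruct (eventually_ge (Rmax 2 (16 * K / m ^ 5))) as [N HN].
  exists N. intros n Hn. specialize (HN n Hn).
  assert (Hn2 : 2 <= INR n) by (pose proof (Rmax_l 2 (16 * K / m ^ 5)); lra).
  assert (HnK : 16 * K / m ^ 5 <= INR n) by (pose proof (Rmax_r 2 (16 * K / m ^ 5)); lra).
  assert (Hm5 : 0 < m ^ 5) by (apply pow_lt; auto).
  assert (H1 : 16 * K <= m ^ 5 * INR n).
  { apply (Rmult_le_compat_l (m ^ 5)) in HnK; [|lra]. replace (m ^ 5 * (16 * K / m ^ 5)) with (16 * K) in HnK by (field; lra). lra. }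
  assert (H2 : (INR n + 2) ^ 4 <= 16 * INR n ^ 4).
  { replace (16 * INR n ^ 4) with ((2 * INR n) ^ 4) by ring. apply pow_incr. lra. }
  assert (H3 : K * (INR n + 2) ^ 4 <= 16 * K * INR n ^ 4).
  { assert (0 <= INR n ^ 4) by (apply pow_le; lra). nra. }
  assert (H4 : 16 * K * INR n ^ 4 <= (m * INR n) ^ 5).
  { replace ((m * INR n) ^ 5) with (m ^ 5 * INR n * INR n ^ 4) by ring.
    apply Rmult_le_compat_r; [apply pow_le; lra| auto]. }
  assert (H5 : (m * INR n) ^ 5 <= exp (m * INR n) ^ 5).
  { apply pow_incr. split. nra. pose proof (exp_ineq1_le (m * INR n)). lra. }
  rewrite exp_pow in H5. replace (INR 5 * (m * INR n)) with (c * INR n) in H5 by (unfold m; simpl; field).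
  lra.
Qed.

Fixpoint findi {T} (P : T -> bool) (l : list T) : nat :=
  match l with [] => 0%nat | c :: l' => if P c then 0%nat else S (findi P l') end.

Lemma findi_spec {T} (P : T -> bool) l d : (exists c, In c l /\ P c = true) ->
  (findi P l < length l)%nat /\ P (nth (findi P l) l d) = true.
Proof.
  induction l as [|c l IH]; intros [c' [Hin Hp]]; [destruct Hin|].
  simpl. destruct (P c) eqn:E.
  - split; [lia| auto].
  - destruct Hin as [->|Hin]; [congruence|]. destruct IH as [H1 H2]; [eauto|]. split; [lia|auto].
Qed.

Lemma gather (Wl : list nat) (B : R) (Cov : nat -> list (list bool) -> Prop) :
  (forall w C C', Cov w C -> incl C C' -> Cov w C') ->
  (forall w, In w Wl -> exists C, INR (length C) <= B /\ Cov w C) ->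
  exists L, INR (length L) <= INR (length Wl) * B /\ forall w, In w Wl -> Cov w L.
Proof.
  intros Hmono. induction Wl as [|w Wl IH]; intros H.
  - exists []. simpl. split; [lra| intros _ []].
  - destruct IH as [L [HL HC]]. { intros; apply H; right; auto. }
    destruct (H w (or_introl eq_refl)) as [C [HCl HCw]].
    exists (C ++ L). split.
    + rewrite length_app, plus_INR. simpl length. rewrite S_INR. lra.
    + intros w' [<-|Hw'].
      * apply (Hmono _ C); auto. intros a Ha; apply in_or_app; auto.
      * apply (Hmono _ L); auto. intros a Ha; apply in_or_app; auto.
Qed.

Lemma nmsg_ge (n : nat) (Rt : R) (m : nat) : INR m <= Rpower 2 (INR n * Rt) -> (m <= nmsg n Rt)%nat.
Proof.
  intros H. unfold nmsg. destruct (base_Int_part (Rpower 2 (INR n * Rt))) as [H1 H2].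
  assert (IZR (Z.of_nat m) < IZR (Int_part (Rpower 2 (INR n * Rt))) + 1) by (rewrite <- INR_IZR_INZ; lra).
  assert (Z.of_nat m <= Int_part (Rpower 2 (INR n * Rt)))%Z.
  { assert (Z.of_nat m < Int_part (Rpower 2 (INR n * Rt)) + 1)%Z. { apply lt_IZR. rewrite plus_IZR. simpl. lra. } lia. }
  lia.
Qed.

Lemma Rpower_ge1 n Rt : 0 <= Rt -> 1 <= Rpower 2 (INR n * Rt).
Proof. intros H. unfold Rpower. pose proof (exp_ineq1_le (INR n * Rt * ln 2)).
  pose proof ln2_pos. pose proof (pos_INR n). assert (0 <= INR n * Rt * ln 2) by (apply Rmult_le_pos; [apply Rmult_le_pos|]; lra). lra. Qed.

Lemma source_code q D Rt : 0 < q -> q <= / 2 -> 0 <= D <= q -> Rt * ln 2 > He q - He D ->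
  forall eps, eps > 0 -> exists N, forall n, (N <= n)%nat ->
  exists (L : list (list bool)) (enc : list bool -> nat),
    (forall bs, (enc bs < nmsg n Rt)%nat) /\
    sumR (fun bs => bprob q bs * (/ INR n * INR (hdist bs (nth (enc bs) L [])))) (all_seqs BA n) <= D + eps.
Proof.
  intros Hq Hq2 [HD0 HDq] HR eps Heps.
  destruct (Req_dec D q) as [->|HDne].
  - exists 1%nat. intros n Hn. exists [[]], (fun _ => 0%nat). split.
    + intros _. apply nmsg_ge. simpl INR. apply Rpower_ge1. pose proof ln2_pos.
      replace (He q - He q) with 0 in HR by ring. assert (0 < Rt) by (apply (Rmult_lt_reg_r (ln 2)); lra). lra.
    + simpl nth. rewrite (sumR_ext _ (fun bs => / INR n * (bprob q bs * INR (wt bs)))) by (intros; rewrite hdist_nil; ring).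
      rewrite sumR_scal, moment1. assert (1 <= INR n) by (apply (le_INR 1); auto). field_simplify; lra.
  - assert (HDq' : D < q) by lra.
    destruct (class_cover q D Hq Hq2 (conj HD0 HDq')) as [K1 [K2 [HK1 Hcc]]].
    set (I := He q - He D) in *.
    set (gap := Rt * ln 2 - I).
    assert (Hgap : 0 < gap) by (unfold gap; lra).
    set (de := Rmin (eps / 4) (gap / (4 * (K1 + 1)))).
    assert (Hde : 0 < de) by (unfold de; apply Rmin_pos; [lra| apply Rdiv_lt_0_compat; lra]).
    assert (Hde1 : de <= eps / 4) by apply Rmin_l.
    assert (Hde2 : de * K1 <= gap / 4).
    { assert (de <= gap / (4 * (K1 + 1))) by apply Rmin_r.
      apply Rle_trans with (gap / (4 * (K1 + 1)) * K1). apply Rmult_le_compat_r; auto.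
      apply (Rmult_le_reg_r (4 * (K1 + 1))); [lra|]. replace (gap / (4 * (K1 + 1)) * K1 * (4 * (K1 + 1))) with (gap * K1) by (field; lra). nra. }
    destruct (poly_exp (3 * gap / 4) (exp K2) ltac:(lra) ltac:(left; apply exp_pos)) as [N1 HN1].
    destruct (eventually_ge (Rmax 2 (Rmax (12 / eps) (Rmax (4 * q * (1 - q) / (de ^ 2 * eps)) (1 / de))))) as [N2 HN2].
    exists (max N1 N2). intros n Hn.
    specialize (HN1 n ltac:(lia)). specialize (HN2 n ltac:(lia)).
    set (nn := INR n) in *.
    assert (Hn2 : 2 <= nn) by (pose proof (Rmax_l 2 (Rmax (12 / eps) (Rmax (4 * q * (1 - q) / (de ^ 2 * eps)) (1 / de)))); lra).
    assert (Hn3 : 12 / eps <= nn).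
    { pose proof (Rmax_r 2 (Rmax (12 / eps) (Rmax (4 * q * (1 - q) / (de ^ 2 * eps)) (1 / de)))).
      pose proof (Rmax_l (12 / eps) (Rmax (4 * q * (1 - q) / (de ^ 2 * eps)) (1 / de))). lra. }
    assert (Hn4 : 4 * q * (1 - q) / (de ^ 2 * eps) <= nn).
    { pose proof (Rmax_r 2 (Rmax (12 / eps) (Rmax (4 * q * (1 - q) / (de ^ 2 * eps)) (1 / de)))).
      pose proof (Rmax_r (12 / eps) (Rmax (4 * q * (1 - q) / (de ^ 2 * eps)) (1 / de))).
      pose proof (Rmax_l (4 * q * (1 - q) / (de ^ 2 * eps)) (1 / de)). lra. }
    assert (Hn5 : 1 / de <= nn).
    { pose proof (Rmax_r 2 (Rmax (12 / eps) (Rmax (4 * q * (1 - q) / (de ^ 2 * eps)) (1 / de)))).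
      pose proof (Rmax_r (12 / eps) (Rmax (4 * q * (1 - q) / (de ^ 2 * eps)) (1 / de))).
      pose proof (Rmax_r (4 * q * (1 - q) / (de ^ 2 * eps)) (1 / de)). lra. }
    assert (Hnde : 1 <= de * nn).
    { apply (Rmult_le_compat_l de) in Hn5; [|lra]. replace (de * (1 / de)) with 1 in Hn5 by (field; lra). lra. }
    destruct (nat_ceil (D * nn + de * nn + 2)) as [tau [Htau1 Htau2]].
    { assert (0 <= de * nn) by lra. nra. }
    set (W := filter (fun w => if Rle_dec (Rabs (INR w - q * nn)) (de * nn) then true else false) (seq 0 (S n))).
    set (B := (nn + 2) * exp (nn * I + de * nn * K1 + K2 + 2 * ln (nn + 1))).
    set (Cov := fun w (C : list (list bool)) => forall x, In x (all_seqs BA n) -> wt x = w -> exists c, In c C /\ (hdist x c <= tau)%nat).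
    destruct (gather W B Cov) as [L [HL HLcov]].
    { intros w C C' HC Hinc x Hx Hxw. destruct (HC x Hx Hxw) as [c [H1 H2]]. exists c; auto. }
    { intros w Hw. unfold W in Hw. apply filter_In in Hw. destruct Hw as [Hw1 Hw2].
      apply in_seq in Hw1. destruct (Rle_dec (Rabs (INR w - q * nn)) (de * nn)) as [Hwt|]; [|discriminate].
      destruct (Hcc n w tau ltac:(lia)) as [C [HC1 HC2]]. { fold nn. lra. }
      exists C. split; auto. fold nn in HC1. unfold B. apply Rle_trans with (1 := HC1).
      apply Rmult_le_compat_l; [lra|]. assert (Rabs (INR w - q * nn) * K1 <= de * nn * K1) by (apply Rmult_le_compat_r; auto).
      destruct (Req_dec (Rabs (INR w - q * nn) * K1) (de * nn * K1)) as [E|E]; [rewrite E; lra|].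
      left. apply exp_increasing. lra. }
    destruct (nat_ceil (q * nn)) as [w0 [Hw01 Hw02]]. { nra. }
    assert (Hw0n : (w0 <= n)%nat). { apply INR_le. fold nn. nra. }
    assert (Hw0W : In w0 W).
    { unfold W. apply filter_In. split. apply in_seq. lia.
      destruct (Rle_dec (Rabs (INR w0 - q * nn)) (de * nn)) as [|NE]; auto. exfalso. apply NE.
      apply Rabs_le. lra. }
    destruct (exists_wt n w0 Hw0n) as [x0 [Hx0 Hx0w]].
    destruct (HLcov w0 Hw0W x0 Hx0 Hx0w) as [c0 [Hc0 _]].
    assert (HLpos : (0 < length L)%nat) by (destruct L; [destruct Hc0| simpl; lia]).
    set (P := fun bs c => hdist bs c <=? tau).
    exists L, (fun bs => if (findi (P bs) L <? length L)%nat then findi (P bs) L else 0%nat).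
    split.
    + intros bs. apply Nat.lt_le_trans with (length L).
      * destruct (findi (P bs) L <? length L)%nat eqn:E; [apply Nat.ltb_lt; auto| auto].
      * apply nmsg_ge. apply Rle_trans with (1 := HL).
        assert (HWl : INR (length W) <= nn + 1).
        { unfold W. fold nn. apply Rle_trans with (INR (length (seq 0 (S n)))).
          - apply le_INR. pose proof (cnt_le_length (fun w => if Rle_dec (Rabs (INR w - q * nn)) (de * nn) then true else false) (seq 0 (S n))). unfold cnt in H. auto.
          - rewrite length_seq, S_INR. fold nn. lra. }
        assert (HB0 : 0 <= B) by (unfold B; apply Rmult_le_pos; [lra| left; apply exp_pos]).
        apply Rle_trans with ((nn + 1) * B). { apply Rmult_le_compat_r; auto. }
        unfold B, Rpower. fold nn.
        replace (2 * ln (nn + 1)) with (ln ((nn + 1) ^ 2)) by (rewrite ln_pow by lra; simpl INR; ring).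
        rewrite !exp_plus. rewrite exp_ln by (apply pow_lt; lra).
        replace (nn * Rt * ln 2) with (nn * I + nn * (gap / 4) + 3 * gap / 4 * nn) by (unfold gap; field).
        rewrite !exp_plus.
        assert (Hx1 : exp (de * nn * K1) <= exp (nn * (gap / 4))).
        { assert (de * nn * K1 <= nn * (gap / 4)) by nra.
          destruct H as [H|H]; [left; apply exp_increasing; auto| rewrite H; lra]. }
        assert (Hp : (nn + 1) * (nn + 2) * (nn + 1) ^ 2 * exp K2 <= exp (3 * gap / 4 * nn)).
        { apply Rle_trans with (2 := HN1). fold nn.
          assert (0 <= exp K2) by (left; apply exp_pos).
          assert ((nn + 1) * (nn + 2) * (nn + 1) ^ 2 <= (nn + 2) ^ 4).
          { replace ((nn + 2) ^ 4) with ((nn + 2) * (nn + 2) * (nn + 2) ^ 2) by ring.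
            apply Rmult_le_compat; try nra; apply pow_incr; lra. }
          nra. }
        pose proof (exp_pos (nn * I)). pose proof (exp_pos (de * nn * K1)). pose proof (exp_pos (nn * (gap / 4))).
        assert (0 <= (nn + 1) * (nn + 2) * (nn + 1) ^ 2 * exp K2) by (pose proof (exp_pos K2); apply Rmult_le_pos; [|lra]; apply Rmult_le_pos; [|apply pow_le]; nra).
        set (E1 := exp (nn * I)) in *. set (E2 := exp (de * nn * K1)) in *. set (E3 := exp (nn * (gap / 4))) in *.
        set (E4 := exp (3 * gap / 4 * nn)) in *. set (E5 := exp K2) in *.
        replace ((nn + 1) * ((nn + 2) * (E1 * E2 * E5 * (nn + 1) ^ 2))) with (((nn + 1) * (nn + 2) * (nn + 1) ^ 2 * E5) * (E1 * E2)) by ring.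
        replace (E1 * E3 * E4) with (E4 * (E1 * E3)) by ring.
        apply Rmult_le_compat; try nra.
    +
      set (enc := fun bs => if (findi (P bs) L <? length L)%nat then findi (P bs) L else 0%nat).
      assert (Hpt : forall bs, In bs (all_seqs BA n) ->
        / nn * INR (hdist bs (nth (enc bs) L [])) <= INR tau / nn + (INR (wt bs) - nn * q) ^ 2 / (de * nn) ^ 2).
      { intros bs Hbs. destruct (in_all_seqs _ _ _ Hbs) as [Hbl _].
        assert (Hnn : 0 < nn) by lra.
        assert (0 <= (INR (wt bs) - nn * q) ^ 2 / (de * nn) ^ 2).
        { unfold Rdiv. apply Rmult_le_pos. apply pow2_ge_0. left; apply Rinv_0_lt_compat. apply pow_lt; nra. }
        assert (0 <= INR tau / nn) by (unfold Rdiv; apply Rmult_le_pos; [apply pos_INR| left; apply Rinv_0_lt_compat; lra]).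
        destruct (Rle_dec (Rabs (INR (wt bs) - q * nn)) (de * nn)) as [Ht|Ht].
        - assert (HwW : In (wt bs) W).
          { unfold W. apply filter_In. split. apply in_seq. pose proof (wt_le bs). lia.
            destruct (Rle_dec (Rabs (INR (wt bs) - q * nn)) (de * nn)); [auto| contradiction]. }
          destruct (HLcov (wt bs) HwW bs Hbs eq_refl) as [c [Hc Hc2]].
          destruct (findi_spec (P bs) L [] (ex_intro _ c (conj Hc (proj2 (Nat.leb_le _ _) Hc2)))) as [F1 F2].
          unfold enc. rewrite (proj2 (Nat.ltb_lt _ _) F1). unfold P in F2. apply Nat.leb_le in F2. apply le_INR in F2.
          assert (/ nn * INR (hdist bs (nth (findi (P bs) L) L [])) <= INR tau / nn).
          { unfold Rdiv. rewrite Rmult_comm. apply Rmult_le_compat_r; auto. left; apply Rinv_0_lt_compat; lra. }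
          lra.
        - pose proof (hdist_le bs (nth (enc bs) L [])) as Hh. apply le_INR in Hh. rewrite Hbl in Hh. fold nn in Hh.
          assert (/ nn * INR (hdist bs (nth (enc bs) L [])) <= 1).
          { apply (Rmult_le_reg_l nn); auto. rewrite <- Rmult_assoc, Rinv_r; lra. }
          assert (Hx : (de * nn) ^ 2 < (INR (wt bs) - nn * q) ^ 2).
          { rewrite <- (pow2_abs (INR (wt bs) - nn * q)). replace (nn * q) with (q * nn) by ring.
            assert (de * nn < Rabs (INR (wt bs) - q * nn)) by lra. assert (0 < de * nn) by nra. nra. }
          assert (1 < (INR (wt bs) - nn * q) ^ 2 / (de * nn) ^ 2).
          { assert (0 < (de * nn) ^ 2) by (apply pow_lt; nra).
            apply (Rmult_lt_reg_r ((de * nn) ^ 2)); auto. unfold Rdiv. rewrite Rmult_assoc, Rinv_l; lra. }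
          lra. }
      apply Rle_trans with (sumR (fun bs => bprob q bs * (INR tau / nn + (INR (wt bs) - nn * q) ^ 2 / (de * nn) ^ 2)) (all_seqs BA n)).
      { apply sumR_le_in. intros bs Hbs. apply Rmult_le_compat_l; [apply bprob_nonneg; lra|]. apply Hpt; auto. }
      rewrite (sumR_ext _ (fun bs => INR tau / nn * bprob q bs + / (de * nn) ^ 2 * (bprob q bs * (INR (wt bs) - INR n * q) ^ 2))) by (intros; fold nn; unfold Rdiv; ring).
      rewrite sumR_plus, !sumR_scal, bprob_sum, variance. fold nn.
      assert (INR tau / nn <= D + eps / 4 + eps / 4).
      { apply Rle_trans with ((D * nn + de * nn + 2 + 1) / nn). { unfold Rdiv. apply Rmult_le_compat_r; auto. left; apply Rinv_0_lt_compat; lra. }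
        replace ((D * nn + de * nn + 2 + 1) / nn) with (D + de + 3 / nn) by (field; lra).
        assert (3 / nn <= eps / 4).
        { apply (Rmult_le_reg_r nn); [lra|]. replace (3 / nn * nn) with 3 by (field; lra).
          apply (Rmult_le_compat_l (eps / 4)) in Hn3; [|lra]. replace (eps / 4 * (12 / eps)) with 3 in Hn3 by (field; lra). lra. }
        lra. }
      assert (/ (de * nn) ^ 2 * (nn * q * (1 - q)) <= eps / 4).
      { replace (/ (de * nn) ^ 2 * (nn * q * (1 - q))) with (q * (1 - q) / (de ^ 2 * nn)) by (field; split; lra).
        apply (Rmult_le_reg_r (de ^ 2 * nn)). { apply Rmult_lt_0_compat; [apply pow_lt|]; lra. }
        replace (q * (1 - q) / (de ^ 2 * nn) * (de ^ 2 * nn)) with (q * (1 - q)) by (field; split; lra).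
        apply (Rmult_le_compat_l (de ^ 2 * eps / 4)) in Hn4. 2:{ assert (0 < de ^ 2) by (apply pow_lt; lra). unfold Rdiv. apply Rmult_le_pos; [|lra]. nra. }
        replace (de ^ 2 * eps / 4 * (4 * q * (1 - q) / (de ^ 2 * eps))) with (q * (1 - q)) in Hn4 by (field; split; lra).
        lra. }
      lra.
Qed.

Fixpoint code3 (l : list nat) : nat := match l with [] => 0%nat | d :: l' => (d + 3 * code3 l')%nat end.
Fixpoint dec3 (n m : nat) : list nat := match n with O => [] | S n' => (m mod 3 + 1)%nat :: dec3 n' (m / 3) end.
Definition digit (x : nat * bool) : nat := ((fst x + 2) mod 3)%nat.

Lemma code3_bound ds : (forall d, In d ds -> d < 3)%nat -> (code3 ds < 3 ^ length ds)%nat.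
Proof. induction ds; simpl; intros H; [lia|]. specialize (IHds (fun d Hd => H d (or_intror Hd))). specialize (H a (or_introl eq_refl)). nia. Qed.

Lemma dec3_code3 ds : (forall d, In d ds -> d < 3)%nat -> dec3 (length ds) (code3 ds) = map (fun d => (d + 1)%nat) ds.
Proof.
  induction ds as [|d ds IH]; cbn [dec3 code3 map length]; intros H; auto. specialize (IH (fun e He => H e (or_intror He))). specialize (H d (or_introl eq_refl)).
  assert (E1 : ((d + 3 * code3 ds) mod 3 = d)%nat).
  { rewrite Nat.mul_comm, Nat.Div0.mod_add. apply Nat.mod_small; auto. }
  assert (E2 : ((d + 3 * code3 ds) / 3 = code3 ds)%nat).
  { rewrite Nat.mul_comm, Nat.div_add by lia. rewrite Nat.div_small by auto. lia. }
  rewrite E1, E2, IH. reflexivity.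
Qed.

Lemma Hb_He x : Hb x = He x / ln 2.
Proof. unfold Hb, He, log2. pose proof ln2_pos. field. lra. Qed.

Lemma map_combine_fst {X Y Z} (f : X -> Y -> Z) (g : X -> X) (xs : list X) (ys : list Y) :
  map (fun p => f (fst p) (snd p)) (combine (map g xs) ys) = map (fun p => f (g (fst p)) (snd p)) (combine xs ys).
Proof. revert ys; induction xs; intros [|y ys]; simpl; auto. rewrite IHxs. reflexivity. Qed.

Lemma map_combine_f1 (xs : list (nat * bool)) (ys : list nat) :
  map (fun pr => Nat.eqb (fst pr) (snd pr)) (combine (map fst xs) ys) = map (fun xy => f1_ex (fst xy) (snd xy)) (combine xs ys).
Proof. revert ys; induction xs; intros [|y ys]; simpl; auto. rewrite IHxs. reflexivity. Qed.

Lemma map_combine_snd (xs : list (nat * bool)) (ys : list nat) : length xs = length ys ->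
  map snd xs = map (fun xy => f2_ex (fst xy) (snd xy)) (combine xs ys).
Proof. revert ys; induction xs; intros [|y ys] H; simpl in *; try lia; auto. rewrite (IHxs ys) by lia. reflexivity. Qed.

Lemma part1 (p D2 : R) : 0 < p -> p <= / 2 -> 0 <= D2 -> D2 <= p ->
  forall R0 RX RY : R, R0 > log2 3 -> RX > Hb p - Hb D2 -> RY > Hb (/ 3) ->
  achievable XA_ex YA_ex (pmf_ex p) f1_ex f2_ex hamming hamming R0 RX RY 0 D2.
Proof.
  intros Hp Hp2 HD0 HDp R0 RX RY H0 HX HY eps Heps.
  pose proof ln2_pos as Hl2.
  rewrite !Hb_He in HX. rewrite Hb_He in HY.
  assert (HX' : RX * ln 2 > He p - He D2).
  { apply (Rmult_gt_compat_r (ln 2)) in HX; auto. replace ((He p / ln 2 - He D2 / ln 2) * ln 2) with (He p - He D2) in HX by (field; lra). lra. }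
  assert (HY' : RY * ln 2 > He (/ 3) - He 0).
  { rewrite He0. apply (Rmult_gt_compat_r (ln 2)) in HY; auto. replace (He (/ 3) / ln 2 * ln 2) with (He (/ 3)) in HY by (field; lra). lra. }
  destruct (source_code (/ 3) 0 RY ltac:(lra) ltac:(lra) ltac:(lra) HY' eps Heps) as [NY HNY].
  destruct (source_code p D2 RX Hp Hp2 (conj HD0 HDp) HX' eps Heps) as [NX HNX].
  exists (max (max NY NX) 1). intros n Hn.
  destruct (HNY n ltac:(lia)) as [LY [encY [HencY HdY]]].
  destruct (HNX n ltac:(lia)) as [LX [encX [HencX HdX]]].
  set (phi0 := fun xs : list (nat * bool) => (code3 (map digit xs) mod 3 ^ n)%nat).
  set (phiX := fun xs : list (nat * bool) => encX (map snd xs)).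
  set (phiY := fun (ys : list nat) (m : nat) => encY (map (fun pr => Nat.eqb (fst pr) (snd pr)) (combine (dec3 n m) ys))).
  set (psi1 := fun (mX mY j : nat) => nth j (nth mY LY []) false).
  set (psi2 := fun (mX mY j : nat) => nth j (nth mX LX []) false).
  exists phi0, phiX, phiY, psi1, psi2.
  assert (Hdec : forall xs, In xs (all_seqs XA_ex n) -> dec3 n (phi0 xs) = map fst xs).
  { intros xs Hxs. destruct (in_all_seqs _ _ _ Hxs) as [Hl Hin].
    assert (Hd : forall d, In d (map digit xs) -> (d < 3)%nat).
    { intros d Hd. apply in_map_iff in Hd. destruct Hd as [x [<- _]]. unfold digit. apply Nat.mod_upper_bound. lia. }
    unfold phi0. rewrite Nat.mod_small.
    - replace n with (length (map digit xs)) at 1 by (rewrite length_map; auto).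
      rewrite dec3_code3 by auto. rewrite map_map. apply map_ext_in. intros x Hx.
      specialize (Hin x Hx). unfold XA_ex in Hin. simpl in Hin.
      destruct Hin as [<-|[<-|[<-|[<-|[<-|[<-|[]]]]]]]; reflexivity.
    - pose proof (code3_bound _ Hd). rewrite length_map, Hl in H. auto. }
  repeat split.
  - intros xs. apply Nat.lt_le_trans with (3 ^ n)%nat.
    + unfold phi0. apply Nat.mod_upper_bound. apply Nat.pow_nonzero. lia.
    + apply nmsg_ge. rewrite pow_INR. simpl INR. replace (1 + 1 + 1) with 3 by ring.
      rewrite pow_exp_ln by lra. unfold Rpower. 
      assert (ln 3 < R0 * ln 2).
      { unfold log2 in H0. apply (Rmult_gt_compat_r (ln 2)) in H0; auto. replace (ln 3 / ln 2 * ln 2) with (ln 3) in H0 by (field; lra). lra. }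
      left. apply exp_increasing. pose proof (pos_INR n). assert (1 <= INR n) by (apply (le_INR 1); lia). nra.
  - intros xs. apply HencX.
  - intros ys m. apply HencY.
  -
    unfold avg_dist.
    rewrite (sumR_ext_in _ (fun xs => sumR (fun ys => seq_prob (pmf_ex p) xs ys *
        (fun bs => / INR n * INR (hdist bs (nth (encY bs) LY []))) (map (fun xy => f1_ex (fst xy) (snd xy)) (combine xs ys))) (all_seqs YA_ex n))).
    2:{ intros xs Hxs. apply sumR_ext. intros ys. f_equal. f_equal.
        unfold psi1, phiY. rewrite Hdec by auto.
        rewrite map_combine_f1.
        rewrite <- sum_idx_hdist. rewrite sum_idx_map. reflexivity. }
    assert (hs : forall H : bool -> R, sumR (fun x => sumR (fun y => pmf_ex p x y * H (f1_ex x y)) YA_ex) XA_ex = / 3 * H true + (1 - / 3) * H false).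
    { intros Hf. unfold XA_ex, YA_ex, pmf_ex, f1_ex. simpl. field. }
    pose proof (pushforward XA_ex YA_ex (pmf_ex p) f1_ex (/ 3) hs n (fun bs => / INR n * INR (hdist bs (nth (encY bs) LY [])))) as PF.
    cbv beta in PF. rewrite PF. apply HdY.
  -
    unfold avg_dist.
    rewrite (sumR_ext_in _ (fun xs => sumR (fun ys => seq_prob (pmf_ex p) xs ys *
        (fun bs => / INR n * INR (hdist bs (nth (encX bs) LX []))) (map (fun xy => f2_ex (fst xy) (snd xy)) (combine xs ys))) (all_seqs YA_ex n))).
    2:{ intros xs Hxs. apply sumR_ext_in. intros ys Hys. f_equal. f_equal.
        unfold psi2, phiX.
        assert (Hm : map snd xs = map (fun xy => f2_ex (fst xy) (snd xy)) (combine xs ys)).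
        { apply map_combine_snd. destruct (in_all_seqs _ _ _ Hxs). destruct (in_all_seqs _ _ _ Hys). lia. }
        rewrite Hm. rewrite <- sum_idx_hdist. rewrite sum_idx_map. reflexivity. }
    assert (hs : forall H : bool -> R, sumR (fun x => sumR (fun y => pmf_ex p x y * H (f2_ex x y)) YA_ex) XA_ex = p * H true + (1 - p) * H false).
    { intros Hf. unfold XA_ex, YA_ex, pmf_ex, f2_ex. simpl. field. }
    pose proof (pushforward XA_ex YA_ex (pmf_ex p) f2_ex p hs n (fun bs => / INR n * INR (hdist bs (nth (encX bs) LX [])))) as PF.
    cbv beta in PF. rewrite PF. apply HdX.
Qed.


Open Scope R_scope.

Theorem mainTheorem8 (p D2 : R) :
  0 < p -> p <= / 2 -> 0 <= D2 -> D2 <= p -> D2 < / 2 ->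
  (forall R0 RX RY : R,
     R0 > log2 3 -> RX > Hb p - Hb D2 -> RY > Hb (/ 3) ->
     achievable XA_ex YA_ex (pmf_ex p) f1_ex f2_ex hamming hamming R0 RX RY 0 D2)
  /\
  (* H(X1|Y) = log2 3 and H(f1(X,Y)) = H_b(1/3) *)
  (forall R0 : R, R0 > log2 3 ->
   forall delta : R, delta > 0 ->
   exists RX RY : R,
     achievable XA_ex YA_ex (pmf_ex p) f1_ex f2_ex hamming hamming R0 RX RY 0 D2 /\
     RX + RY < Hb (/ 3) + Hb p - Hb D2 + delta).
Proof.
  intros Hp Hp2 HD0 HDp HD2. split.
  - intros R0 RX RY H0 HX HY. apply part1; auto.
  - intros R0 HR0 delta Hd. exists (Hb p - Hb D2 + delta / 3), (Hb (/ 3) + delta / 3). split.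
    + apply part1; auto; lra.
    + lra.
Qed.
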